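(* Let $(X,d_X)$ and $(\Lambda,d_\Lambda)$ be complete metric spaces and, for each $\lambda\in\Lambda$, let $S_\lambda(\cdot,\cdot)$ be a process on $X$. Suppose there exists a compact set $K\subseteq X$ such that (a) for every bounded $B\subseteq X$ and each $\lambda\in\Lambda$ there exists $t_{B,\lambda}$ such that $S_\lambda(t+s,s)B\subseteq K$ for all $t\ge t_{B,\lambda}$ and all $s\in\mathbb R$; and (b) for any $t>0$, the map $\lambda\mapsto S_\lambda(t+s,s)x$ is continuous on $\Lambda$, uniformly for $s\in\mathbb R$ and $x\in K$ (i.e. for each $\lambda_0\in\Lambda$, $t>0$, $\epsilon>0$ there is $\delta>0$ such that $d_\Lambda(\lambda,\lambda_0)<\delta$ implies $d_X(S_\lambda(t+s,s)x,S_{\lambda_0}(t+s,s)x)<\epsilon$ for all $s\in\mathbb R$, $x\in K$). Then the map $\lambda\mapsto\mathbb A_\lambda$, where $\mathbb A_\lambda$ is the uniform attractor of $S_\lambda$, is continuous with respect to the Hausdorff distance at every point of a residual subset of $\Lambda$.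
   Context: A process on a complete metric space $(X,d_X)$ is a two-parameter family of maps $S(t,s):X\to X$, $s\in\mathbb R$, $t\ge s$, with $S(t,t)=\mathrm{id}$, $S(t,\tau)S(\tau,s)=S(t,s)$ for $t\ge\tau\ge s$, and $S(t,s)x$ continuous in $(x,t,s)$. The Hausdorff semi-distance is $\rho_X(A,C)=\sup_{a\in A}\inf_{c\in C}d_X(a,c)$ and the Hausdorff distance is $\Delta_X(A,C)=\max(\rho_X(A,C),\rho_X(C,A))$. The uniform attractor of a process $S$ is the minimal compact set $\mathbb A\subseteq X$ such that $\lim_{t\to\infty}\sup_{s\in\mathbb R}\rho_X(S(t+s,s)B,\mathbb A)=0$ for every bounded $B\subseteq X$; under assumption (a) the uniform attractor $\mathbb A_\lambda$ of $S_\lambda$ exists for each $\lambda$. A subset of $\Lambda$ is residual if its complement is a countable union of nowhere dense sets. *)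

(* Defs.v *)
From HB Require Import structures.
From mathcomp Require Import all_boot all_order all_algebra.
From mathcomp Require Import all_classical all_reals.
From mathcomp Require Import ereal.
Set Implicit Arguments. Unset Strict Implicit. Unset Printing Implicit Defensive.
Import Order.TTheory GRing.Theory Num.Theory.
Local Open Scope classical_set_scope.
Local Open Scope ring_scope.

Section MetricDefs.
Variables (R : realType) (X : Type) (d : X -> X -> R).

Definition is_metric : Prop :=
  (forall x y, 0 <= d x y) /\ (forall x y, d x y = 0 <-> x = y) /\
  (forall x y, d x y = d y x) /\ (forall x y z, d x z <= d x y + d y z).

Definition metric_cauchy (u : nat -> X) : Prop :=
  forall e : R, 0 < e -> exists N : nat, forall m n, (N <= m)%N -> (N <= n)%N -> d (u m) (u n) < e.

Definition metric_conv (u : nat -> X) (l : X) : Prop :=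
  forall e : R, 0 < e -> exists N : nat, forall n, (N <= n)%N -> d (u n) l < e.

Definition complete_metric : Prop :=
  is_metric /\ forall u : nat -> X, metric_cauchy u -> exists l, metric_conv u l.

Definition mbounded (B : set X) : Prop :=
  exists x0 (r : R), forall b, B b -> d x0 b <= r.

(* sequential compactness (equivalent to compactness in metric spaces) *)
Definition mcompact (K : set X) : Prop :=
  forall u : nat -> X, (forall n, K (u n)) ->
    exists (phi : nat -> nat) (l : X), (forall n, (phi n < phi n.+1)%N) /\ K l /\
      metric_conv (u \o phi) l.

Definition mclosure (A : set X) : set X :=
  fun x => forall e : R, 0 < e -> exists a, A a /\ d x a < e.

Definition nowhere_dense (N : set X) : Prop :=
  ~ exists x (e : R), 0 < e /\ (forall y, d x y < e -> mclosure N y).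

Definition residual (G : set X) : Prop :=
  exists N : nat -> set X, (forall n, nowhere_dense (N n)) /\ ~` G = \bigcup_n N n.

Definition hsemidist (A C : set X) : \bar R :=
  ereal_sup [set ereal_inf [set (d a c)%:E | c in C] | a in A].

Definition hdist (A C : set X) : \bar R :=
  Order.max (hsemidist A C) (hsemidist C A).
End MetricDefs.

Section ProcessDefs.
Variables (R : realType) (X : Type) (d : X -> X -> R).

(* S t s x = S(t,s)x ; only meaningful for t >= s *)
Definition is_process (S : R -> R -> X -> X) : Prop :=
  (forall t x, S t t x = x) /\
  (forall t tau s x, tau <= t -> s <= tau -> S t tau (S tau s x) = S t s x) /\
  (forall x t s, s <= t -> forall e : R, 0 < e -> exists del : R, 0 < del /\
     forall x' t' s', s' <= t' -> d x x' < del -> `|t - t'| < del -> `|s - s'| < del ->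
       d (S t s x) (S t' s' x') < e).

(* A uniformly attracts bounded sets:
   lim_{t->oo} sup_s rho(S(t+s,s)B, A) = 0 (written as: eventually <= e, for all e>0) *)
Definition unif_attracting (S : R -> R -> X -> X) (A : set X) : Prop :=
  forall B, mbounded d B -> forall e : R, 0 < e -> exists T : R, forall t, T <= t ->
    (ereal_sup [set hsemidist d (S (t + s)%R s @` B) A | s in [set: R]] <= e%:E)%E.

Definition is_uniform_attractor (S : R -> R -> X -> X) (A : set X) : Prop :=
  mcompact d A /\ unif_attracting S A /\
  forall C, mcompact d C -> unif_attracting S C -> A `<=` C.
End ProcessDefs.

(* Main.v *)
Require Import Defs.
From HB Require Import structures.
From mathcomp Require Import all_boot all_order all_algebra.
From mathcomp Require Import all_classical all_reals.
From mathcomp Require Import ereal lra.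
From Stdlib Require Import Classical.
Import Order.TTheory GRing.Theory Num.Theory.
Local Open Scope classical_set_scope.
Local Open Scope ring_scope.
Set Implicit Arguments. Unset Strict Implicit.

Lemma inv_small (R : realType) (e : R) : 0 < e -> exists n : nat, (n.+1%:R)^-1 < e.
Proof.
move=> e0; exists (Num.bound (e^-1)).
have e1 : 0 <= e^-1 by rewrite invr_ge0 ltW.
have h := archi_boundP e1.
rewrite invf_plt ?posrE ?ltr0n //.
apply: (lt_le_trans h); rewrite ler_nat; exact: leqnSn.
Qed.

Arguments inv_small {R} e.

Lemma phi_ge (phi : nat -> nat) : (forall n, phi n < phi n.+1)%N -> forall n, (n <= phi n)%N.
Proof.
move=> h; elim=> [|n IH] //; apply: leq_ltn_trans IH (h n).
Qed.

Section M.
Variables (R : realType) (T : Type) (d : T -> T -> R).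
Hypothesis md : is_metric d.

Lemma dge0 x y : 0 <= d x y. Proof. by case: md. Qed.
Lemma dxx x : d x x = 0. Proof. by case: md => _ [h _]; apply/h. Qed.
Lemma dsym x y : d x y = d y x. Proof. by case: md => _ [_ [h _]]. Qed.
Lemma dtri x y z : d x z <= d x y + d y z. Proof. by case: md => _ [_ [_ h]]. Qed.

Definition close (P Q : set T) (e : R) :=
  (forall a, P a -> exists c, Q c /\ d a c < e) /\
  (forall a, Q a -> exists c, P c /\ d a c < e).

Lemma close_sym P Q e : close P Q e -> close Q P e.
Proof. by case=> h1 h2; split. Qed.

Lemma close_tri P Q W e1 e2 : close P Q e1 -> close Q W e2 -> close P W (e1 + e2).
Proof.
case=> h1 h2 [g1 g2]; split.
- move=> a Pa; have [c [Qc dac]] := h1 a Pa; have [c' [Wc' dcc']] := g1 c Qc.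
  exists c'; split => //; have := dtri a c c'; lra.
- move=> a Wa; have [c [Qc dac]] := g2 a Wa; have [c' [Pc' dcc']] := h2 c Qc.
  exists c'; split => //; have := dtri a c c'; lra.
Qed.

Lemma close_le P Q e1 e2 : e1 <= e2 -> close P Q e1 -> close P Q e2.
Proof.
move=> le [h1 h2]; split.
- move=> a /h1 [c [Qc h]]; exists c; split => //; lra.
- move=> a /h2 [c [Qc h]]; exists c; split => //; lra.
Qed.

Lemma baire (cpl : forall u, metric_cauchy d u -> exists l, metric_conv d u l)
  (E : nat -> set T) x r : 0 < r -> (forall N w, mclosure d (E N) w -> E N w) ->
  (forall w, d x w < r -> exists N, E N w) ->
  exists N y rho, d x y < r /\ 0 < rho /\ forall w, d y w < rho -> E N w.
Proof.
move=> r0 Ecl Ecov; apply: NNPP => H.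
have step : forall N y rho, 0 < rho -> d x y + rho <= r -> exists y' rho',
   [/\ 0 < rho', rho' <= (N.+1%:R)^-1, d y y' + 2 * rho' <= rho &
     forall w, d y' w < 2 * rho' -> ~ E N w].
{ move=> N y rho rho0 hy.
  have [z [dyz nEz]] : exists z, d y z < rho /\ ~ E N z.
  { apply: NNPP => H2; apply: H; exists N, y, rho; split; first lra.
    split => // w dyw; apply: NNPP => nE; apply: H2; exists w; split => //. }
  have [tau [tau0 htau]] : exists tau, 0 < tau /\ forall w, d z w < tau -> ~ E N w.
  { apply: NNPP => H3; apply: nEz; apply: Ecl => e e0; apply: NNPP => H4.
    apply: H3; exists e; split => // w dzw Ew; apply: H4; exists w; split => //. }
  pose rho' := Num.min (tau / 2) (Num.min ((rho - d y z) / 2) (N.+1%:R)^-1).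
  have f1 : rho' <= tau / 2 by rewrite /rho' ge_min lexx.
  have f2 : rho' <= (rho - d y z) / 2 by rewrite /rho' !ge_min lexx orbT.
  have f3 : rho' <= (N.+1%:R)^-1 by rewrite /rho' !ge_min lexx !orbT.
  have f4 : 0 < rho'.
  { rewrite /rho' !lt_min invr_gt0 ltr0n andbT; apply/andP; split; lra. }
  exists z, rho'; split => //; first lra.
  move=> w dzw; apply: htau; lra. }
have step' : forall p : nat * (T * R), exists q : T * R,
   (0 < p.2.2 /\ d x p.2.1 + p.2.2 <= r) ->
   [/\ 0 < q.2, q.2 <= (p.1.+1%:R)^-1, d p.2.1 q.1 + 2 * q.2 <= p.2.2,
     (forall w, d q.1 w < 2 * q.2 -> ~ E p.1 w) & d x q.1 + q.2 <= r].
{ move=> [N [y rho]] /=.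
  case: (classic (0 < rho /\ d x y + rho <= r)) => [[h1 h2]|hn]; last first.
    by exists (x, 0) => hh.
  have [y' [rho' [g1 g2 g3 g4]]] := step N y rho h1 h2.
  exists (y', rho') => _ /=; split => //.
  have := dtri x y y'; lra. }
have [g hg] := choice step'.
pose sq := fix sq (n : nat) : T * R := if n is n'.+1 then g (n', sq n') else (x, r / 2).
have inv : forall n, 0 < (sq n).2 /\ d x (sq n).1 + (sq n).2 <= r.
{ elim=> [|n [IH1 IH2]] /=; first by rewrite dxx; split; lra.
  have [] := hg (n, sq n) (conj IH1 IH2) => /= ? ? ? ? ?; split => //. }
have props : forall n, [/\ 0 < (sq n.+1).2, (sq n.+1).2 <= (n.+1%:R)^-1,
   d (sq n).1 (sq n.+1).1 + 2 * (sq n.+1).2 <= (sq n).2 &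
   forall w, d (sq n.+1).1 w < 2 * (sq n.+1).2 -> ~ E n w].
{ move=> n; have [] := hg (n, sq n) (inv n) => /= ? ? ? ? ?; split => //. }
have mono : forall N M, (N <= M)%N -> d (sq N).1 (sq M).1 + (sq M).2 <= (sq N).2.
{ move=> N; elim=> [|M IH].
    by rewrite leqn0 => /eqP ->; rewrite dxx; lra.
  rewrite leq_eqVlt ltnS => /orP [/eqP <-|/IH h]; first by rewrite dxx; lra.
  have [p1 _ p3 _] := props M.
  have := dtri (sq N).1 (sq M).1 (sq M.+1).1; lra. }
have [l hl] : exists l, metric_conv d (fun n => (sq n).1) l.
{ apply: cpl => e e0.
  have e2 : 0 < e / 2 by lra.
  have [n hn] := inv_small _ e2.
  exists n.+1 => m m' hm hm'; cbv beta.
  have h1 := mono _ _ hm; have h2 := mono _ _ hm'.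
  have [p1 p2 _ _] := props n.
  have := dtri (sq m).1 (sq n.+1).1 (sq m').1.
  have := dsym (sq m).1 (sq n.+1).1.
  have := (inv m).1; have := (inv m').1; move=> q1 q2 q3 q4.
  have q5 : d (sq m).1 (sq m').1 <= 2 * (sq n.+1).2 by lra.
  have q6 := le_lt_trans p2 hn; lra. }
have dl : forall N, d (sq N).1 l <= (sq N).2.
{ move=> N; rewrite leNgt; apply/negP => h.
  have [M0 hM0] := hl (d (sq N).1 l - (sq N).2) (ltac:(lra)).
  have hM := hM0 (maxn N M0) (leq_maxr _ _); cbv beta in hM.
  have hm := mono N (maxn N M0) (leq_maxl _ _).
  have := dtri (sq N).1 (sq (maxn N M0)).1 l.
  have := (inv (maxn N M0)).1; lra. }
have [N EN] : exists N, E N l.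
{ apply: Ecov; have := dl 0%N; have := dtri x (sq 0%N).1 l => /=.
  rewrite dxx; lra. }
have [p1 _ _ p4] := props N.
apply: (p4 l) EN; have := dl N.+1; lra.
Qed.

End M.

Section P.
Variables (R : realType) (X L : Type) (dX : X -> X -> R) (dL : L -> L -> R)
  (S : L -> R -> R -> X -> X) (A : L -> set X) (K : set X).
Hypotheses (mX : is_metric dX) (mL : is_metric dL)
  (pS : forall lam, is_process dX (S lam)) (cK : mcompact dX K)
  (absorb : forall B, mbounded dX B -> forall lam, exists tB : R,
     forall t s, 0 <= t -> tB <= t -> S lam (t + s) s @` B `<=` K)
  (cont : forall lam0 (t e : R), 0 < t -> 0 < e -> exists del : R, 0 < del /\
     forall lam, dL lam lam0 < del -> forall s x, K x ->
       dX (S lam (t + s) s x) (S lam0 (t + s) s x) < e)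
  (att : forall lam, is_uniform_attractor dX (S lam) (A lam)).

Definition tn (n : nat) : R := n.+1%:R.

Definition ff n lam : set X := fun x => forall eta, 0 < eta ->
  exists s y, K y /\ dX x (S lam (tn n + s) s y) < eta.

Lemma tn_gt0 n : 0 < tn n. Proof. by rewrite /tn ltr0n. Qed.

Lemma tn_big (T : R) : exists N, forall n, (N <= n)%N -> T <= tn n.
Proof.
exists (Num.bound `|T|) => n hn.
have h1 := archi_boundP (normr_ge0 T).
have h2 : (Num.bound `|T|)%:R <= tn n :> R.
  by rewrite /tn ler_nat; apply: leq_trans hn _.
have h3 := ler_norm T.
apply: le_trans h3 _; apply: ltW; exact: lt_le_trans h1 h2.
Qed.

Lemma compact_bounded (x0 : X) : mbounded dX K.
Proof.
apply: NNPP => H.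
have hb : forall n : nat, exists b, K b /\ n%:R < dX x0 b.
{ move=> n; apply: NNPP => Hn; apply: H; exists x0, n%:R => b Kb.
  rewrite leNgt; apply/negP => lt; apply: Hn; exists b; split => //. }
have [u hu] := choice hb.
have [phi [l [mon [Kl cv]]]] := @cK u (fun n => (hu n).1).
have [N hN] := cv 1 ltr01.
have [M hM] := tn_big (dX x0 l + 2).
pose n := maxn N M.
have h1 := hN n (leq_maxl _ _); cbv beta in h1; rewrite /= in h1.
have h2 := hM n (leq_maxr _ _).
have h3 := (hu (phi n)).2.
have h4 : tn n <= (phi n)%:R + 1 :> R.
  by rewrite /tn natr1 ler_nat ltnS phi_ge.
have := dtri mX x0 l (u (phi n)); have := dsym mX l (u (phi n)).
have h5 : dX x0 l + 2 < dX x0 (u (phi n)) + 1.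
  apply: (le_lt_trans (le_trans h2 h4)); by rewrite ltrD2r.
lra.
Qed.

Lemma P1 n lam0 e : 0 < e -> exists del, 0 < del /\
  forall lam, dL lam lam0 < del -> close dX (ff n lam) (ff n lam0) e.
Proof.
move=> e0; have e2 : 0 < e / 2 by lra.
have [del [del0 hdel]] := cont lam0 (tn_gt0 n) e2.
exists del; split => // lam hl; split.
- move=> x fx; have [s [y [Ky h]]] := fx (e / 2) e2.
  exists (S lam0 (tn n + s) s y); split.
  + by move=> eta eta0; exists s, y; split => //; rewrite (dxx mX).
  + have := hdel lam hl s y Ky.
    have := dtri mX x (S lam (tn n + s) s y) (S lam0 (tn n + s) s y); lra.
- move=> x fx; have [s [y [Ky h]]] := fx (e / 2) e2.
  exists (S lam (tn n + s) s y); split.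
  + by move=> eta eta0; exists s, y; split => //; rewrite (dxx mX).
  + have := hdel lam hl s y Ky; have := dsym mX (S lam (tn n + s) s y) (S lam0 (tn n + s) s y).
    have := dtri mX x (S lam0 (tn n + s) s y) (S lam (tn n + s) s y); lra.
Qed.

Lemma A_sub_C (x0 : X) lam : exists tK, forall t, 0 <= t -> tK <= t ->
  A lam `<=` (fun x => K x /\ forall eta, 0 < eta ->
     exists s y, K y /\ dX x (S lam (t + s) s y) < eta).
Proof.
have bK := compact_bounded x0.
have [tK htK] := absorb bK lam.
exists tK => t t0 tKt.
case: (att lam) => _ [_ mini]; apply: mini.
- move=> u hu.
  have [phi [l [mon [Kl cv]]]] := @cK u (fun n => (hu n).1).
  exists phi, l; split => //; split => //; split => // eta eta0.
  have e2 : 0 < eta / 2 by lra.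
  have [N hN] := cv _ e2.
  have h1 := hN N (leqnn N); rewrite /= in h1.
  have [s [y [Ky h]]] := (hu (phi N)).2 _ e2.
  exists s, y; split => //.
  have := dtri mX l (u (phi N)) (S lam (t + s) s y); have := dsym mX l (u (phi N)); lra.
- move=> B bB e e0.
  have [tB htB] := absorb bB lam.
  exists (t + `|tB|) => t' ht'.
  apply: ge_ereal_sup => z [s _ <-].
  apply: ge_ereal_sup => w [a [b Bb <-] <-].
  apply: ge_ereal_inf.
  have htB' := ler_norm tB; have htB2 := normr_ge0 tB.
  pose s' := (t' - t) + s.
  have Ky : K (S lam s' s b).
    by apply: (htB (t' - t) s); [lra|lra|exists b].
  have ey : S lam (t' + s) s b = S lam (t + s') s' (S lam s' s b).
  { have -> : t' + s = t + s' by rewrite /s'; lra.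
    symmetry; apply: (pS lam).2.1; rewrite /s'; lra. }
  exists (dX (S lam (t' + s) s b) (S lam (t' + s) s b))%:E; last first.
    by rewrite (dxx mX) lee_fin ltW.
  exists (S lam (t' + s) s b) => //; split.
  + rewrite ey; apply: (htK t s') => //; exists (S lam s' s b) => //.
  + move=> eta eta0; exists s', (S lam s' s b); split => //; rewrite ey (dxx mX) //.
Qed.

Lemma A_sub_f (x0 : X) lam : exists N, forall n, (N <= n)%N -> A lam `<=` ff n lam.
Proof.
have [tK htK] := A_sub_C x0 lam.
have [N hN] := tn_big tK.
exists N => n hn x Ax.
have [_ h] := htK (tn n) (ltW (tn_gt0 n)) (hN n hn) x Ax; exact: h.
Qed.

Lemma f_near_A (x0 : X) lam e : 0 < e -> exists N, forall n, (N <= n)%N ->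
  forall x, ff n lam x -> exists c, A lam c /\ dX x c < e.
Proof.
move=> e0; have bK := compact_bounded x0.
case: (att lam) => _ [uatt _].
have e4 : 0 < e / 4 by lra.
have [T hT] := uatt K bK (e / 4) e4.
have [N hN] := tn_big T.
exists N => n hn x fx.
have hsup := hT (tn n) (hN n hn).
have e2 : 0 < e / 2 by lra.
have [s [y [Ky hxy]]] := fx (e / 2) e2.
have h1 : (hsemidist dX (S lam (tn n + s) s @` K) (A lam) <= (e / 4)%:E)%E.
  by apply: le_trans hsup; apply: ereal_sup_ubound; exists s.
have h2 : (ereal_inf [set (dX (S lam (tn n + s) s y) c)%:E | c in A lam] <= (e / 4)%:E)%E.
  by apply: le_trans h1; apply: ereal_sup_ubound; exists (S lam (tn n + s) s y) => //; exists y.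
have h3 : (ereal_inf [set (dX (S lam (tn n + s) s y) c)%:E | c in A lam] < (e / 2)%:E)%E.
  by apply: le_lt_trans h2 _; rewrite lte_fin; lra.
have [w [c Ac <-] hw] := ereal_inf_lt h3.
rewrite lte_fin in hw.
exists c; split => //.
have := dtri mX x (S lam (tn n + s) s y) c; lra.
Qed.

Lemma close_fA (x0 : X) lam e : 0 < e -> exists N, forall n, (N <= n)%N ->
  close dX (ff n lam) (A lam) e.
Proof.
move=> e0.
have [N0 h0] := A_sub_f x0 lam; have [N1 h1] := f_near_A x0 lam e0.
exists (maxn N0 N1) => n hn; split.
- by apply: h1; apply: leq_trans hn; exact: leq_maxr.
- move=> a Aa; exists a; split; last by rewrite (dxx mX).
  by apply: (h0 n) => //; apply: leq_trans hn; exact: leq_maxl.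
Qed.

Definition eps (k : nat) : R := (k.+1%:R)^-1.

Definition Fk (k : nat) : set L := fun lam0 => forall del, 0 < del ->
  exists lam, dL lam lam0 < del /\ ~ close dX (A lam) (A lam0) (eps k).

Lemma Fk_nowhere (cplL : forall u, metric_cauchy dL u -> exists l, metric_conv dL u l) k :
  nowhere_dense dL (Fk k).
Proof.
move=> [x0 [r [r0 hball]]].
case: (classic (inhabited X)) => [[xX]|nX]; last first.
  have dd : dL x0 x0 < r by rewrite (dxx mL).
  have [lam0 [Flam0 _]] := hball x0 dd 1 ltr01.
  have [lam [_ nc]] := Flam0 1 ltr01.
  by apply: nc; split => a; exfalso; apply: nX; exact: (inhabits a).
have epsk0 : 0 < eps k by rewrite /eps invr_gt0 ltr0n.
pose ep := eps k / 8.
have ep0 : 0 < ep by rewrite /ep; lra.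
pose E N : set L := fun lam => forall n m, (N <= n)%N -> (N <= m)%N ->
  forall eta, 0 < eta -> close dX (ff n lam) (ff m lam) (ep + eta).
have Ecl : forall N w, mclosure dL (E N) w -> E N w.
{ move=> N w clw n m hn hm eta eta0.
  have e3 : 0 < eta / 3 by lra.
  have [d1 [d10 h1]] := P1 n w e3.
  have [d2 [d20 h2]] := P1 m w e3.
  have d12 : 0 < Num.min d1 d2 by rewrite lt_min d10 d20.
  have [a [Ea dwa]] := clw _ d12.
  have da1 : dL a w < d1.
    by rewrite (dsym mL); apply: lt_le_trans dwa _; rewrite ge_min lexx.
  have da2 : dL a w < d2.
    by rewrite (dsym mL); apply: lt_le_trans dwa _; rewrite ge_min lexx orbT.
  have c1 := close_sym (h1 a da1).
  have c2 := Ea n m hn hm (eta / 3) e3.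
  have c3 := h2 a da2.
  apply: close_le (close_tri mX (close_tri mX c1 c2) c3); lra. }
have Ecov : forall w, dL x0 w < r -> exists N, E N w.
{ move=> w _.
  have ep2 : 0 < ep / 2 by lra.
  have [N hN] := close_fA xX w ep2.
  exists N => n m hn hm eta eta0.
  have c := close_tri mX (hN n hn) (close_sym (hN m hm)).
  apply: close_le c; lra. }
have [N [y [rho [dxy [rho0 hE]]]]] := baire mL cplL r0 Ecl Ecov.
have claim1 : forall lam, dL y lam < rho -> close dX (A lam) (ff N lam) (3 * ep).
{ move=> lam hl.
  have [n0 hn0] := close_fA xX lam ep0.
  have c1 := close_sym (hn0 (maxn N n0) (leq_maxr _ _)).
  have c2 := hE lam hl (maxn N n0) N (leq_maxl _ _) (leqnn N) ep ep0.
  apply: close_le (close_tri mX c1 c2); lra. }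
have [d1 [d10 h1]] := P1 N y ep0.
pose tau := Num.min (rho / 2) (d1 / 2).
have tau1 : tau <= rho / 2 by rewrite /tau ge_min lexx.
have tau2 : tau <= d1 / 2 by rewrite /tau ge_min lexx orbT.
have tau0 : 0 < tau by rewrite /tau lt_min; apply/andP; split; lra.
have [lam0 [F0 dy0]] := hball y dxy tau tau0.
have [lam [dl nc]] := F0 tau tau0.
have dyl : dL y lam < 2 * tau.
  by have := dtri mL y lam0 lam; have := dsym mL lam lam0; lra.
have q1 : dL y lam < rho by lra.
have q2 : dL lam y < d1 by rewrite (dsym mL); lra.
have q3 : dL lam0 y < d1 by rewrite (dsym mL); lra.
have q4 : dL y lam0 < rho by lra.
have c1 := claim1 lam q1.
have c2 := h1 lam q2.
have c3 := close_sym (h1 lam0 q3).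
have c4 := close_sym (claim1 lam0 q4).
apply: nc; apply: close_le (close_tri mX (close_tri mX (close_tri mX c1 c2) c3) c4).
rewrite /ep; lra.
Qed.

End P.

Lemma hdist_close (R : realType) (X : Type) (d : X -> X -> R) P Q (e' e : R) :
  e' < e -> close d P Q e' -> (hdist d P Q < e%:E)%E.
Proof.
move=> lt [h1 h2]; rewrite /hdist gt_max.
have key : forall P Q, (forall a, P a -> exists c, Q c /\ d a c < e') ->
   (hsemidist d P Q < e%:E)%E.
{ move=> P' Q' h; apply: (@le_lt_trans _ _ e'%:E); last by rewrite lte_fin.
  apply: ge_ereal_sup => z [a Pa <-].
  have [c [Qc hc]] := h a Pa.
  apply: ge_ereal_inf; exists (d a c)%:E; first by exists c.
  by rewrite lee_fin ltW. }
by rewrite !key.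
Qed.

Unset Implicit Arguments.

Theorem theorem4p1 (R : realType) (X L : Type) (dX : X -> X -> R) (dL : L -> L -> R)
  (S : L -> R -> R -> X -> X) (A : L -> set X) (K : set X) :
  complete_metric dX -> complete_metric dL ->
  (forall lam, is_process dX (S lam)) ->
  mcompact dX K ->
  (forall B, mbounded dX B -> forall lam, exists tB : R,
     forall t s, 0 <= t -> tB <= t -> S lam (t + s) s @` B `<=` K) ->
  (forall lam0 (t e : R), 0 < t -> 0 < e -> exists del : R, 0 < del /\
     forall lam, dL lam lam0 < del -> forall s x, K x ->
       dX (S lam (t + s) s x) (S lam0 (t + s) s x) < e) ->
  (forall lam, is_uniform_attractor dX (S lam) (A lam)) ->
  exists G : set L, residual dL G /\
    forall lam0, G lam0 -> forall e : R, 0 < e -> exists del : R, 0 < del /\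
      forall lam, dL lam lam0 < del -> (hdist dX (A lam) (A lam0) < e%:E)%E.
Proof.
move=> [mX _] [mL cplL] pS cK absorb cont att.
exists (~` \bigcup_k Fk dX dL A k); split.
  exists (Fk dX dL A); split; last by rewrite setCK.
  move=> k; exact: (@Fk_nowhere _ _ _ _ _ _ _ _ mX mL pS cK absorb cont att cplL k).
move=> lam0 Glam0 e e0.
have [k hk] := inv_small _ e0.
have nF : ~ Fk dX dL A k lam0 by move=> F; apply: Glam0; exists k.
have [del [del0 hdel]] : exists del, 0 < del /\ forall lam, dL lam lam0 < del ->
    close dX (A lam) (A lam0) (eps R k).
{ apply: NNPP => H2; apply: nF => del del0; apply: NNPP => H3; apply: H2.
  exists del; split => // lam hl; apply: NNPP => nc; apply: H3; exists lam; split => //. }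
exists del; split => // lam hl.
exact: (hdist_close hk (hdel lam hl)).
Qed.
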